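(* Let $\mathcal{X}$ be a finite set, $\underline{Q}$ a lower transition rate operator on $\mathcal{L}(\mathcal{X})$, $t>0$, and let $\Gamma\colon[0,t]\to\mathcal{L}(\mathcal{X})$ be continuously differentiable with $\frac{d}{ds}\Gamma(s)\ge\underline{Q}\Gamma(s)$ (pointwise) for all $s\in[0,t]$. Then $\min\Gamma(t)\ge\min\Gamma(0)$.
   Context: $\mathcal{L}(\mathcal{X})$ is the set of real-valued functions on $\mathcal{X}$ (identified with $\mathbb{R}^{\mathcal{X}}$) with pointwise operations and order, real constants identified with constant functions, $\mathbb{I}_y$ the indicator of $\{y\}$. A lower transition rate operator is a map $\underline{Q}\colon\mathcal{L}(\mathcal{X})\to\mathcal{L}(\mathcal{X})$ such that for all $f,g$, $\lambda\ge0$, $\mu\in\mathbb{R}$, $x,y\in\mathcal{X}$: $\underline{Q}(\mu)=0$; $\underline{Q}(f+g)\ge\underline{Q}f+\underline{Q}g$; $\underline{Q}(\lambda f)=\lambda\underline{Q}f$; $x\ne y\Rightarrow\underline{Q}(\mathbb{I}_y)(x)\ge0$. *)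

(* Defs.v *)
From HB Require Import structures.
From mathcomp Require Import all_boot all_order all_algebra.
From mathcomp Require Import all_classical all_reals all_analysis.
Set Implicit Arguments. Unset Strict Implicit. Unset Printing Implicit Defensive.
Import Order.TTheory GRing.Theory Num.Theory.
Import numFieldNormedType.Exports.
Local Open Scope classical_set_scope.
Local Open Scope ring_scope.

(* L(X) is identified with X -> R. *)

Definition lower_transition_rate_operator (R : realType) (X : finType)
    (Q : (X -> R) -> (X -> R)) : Prop :=
  [/\ (forall mu : R, Q (fun _ => mu) = (fun _ => 0)),
      (forall (f g : X -> R) (x : X), Q f x + Q g x <= Q (fun z => f z + g z) x),
      (forall (lam : R) (f : X -> R), 0 <= lam ->
          Q (fun z => lam * f z) = (fun z => lam * Q f z)) &
      (forall x y : X, x != y -> 0 <= Q (fun z => if z == y then 1 else 0) x)].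

(* [l] is the derivative of [f] at [s] relative to the set [A]
   (one-sided at boundary points of an interval A). *)
Definition has_deriv_within (R : realType) (A : set R) (f : R -> R) (s l : R) : Prop :=
  (fun h : R => h^-1 * (f (s + h) - f s))
    @ within [set h : R | h != 0 /\ A (s + h)] (nbhs (0 : R)) --> l.

(* minimum of a function on a nonempty finite set (x0 witnesses nonemptiness) *)
Definition fmin (R : realType) (X : finType) (x0 : X) (f : X -> R) : R :=
  \big[Num.min/f x0]_(x : X) f x.

(* Main.v *)
Require Import Defs.
From HB Require Import structures.
From mathcomp Require Import all_boot all_order all_algebra.
From mathcomp Require Import all_classical all_reals all_analysis.
From mathcomp Require Import ring lra.
Import Order.TTheory GRing.Theory Num.Theory.
Import numFieldNormedType.Exports.
Local Open Scope classical_set_scope.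
Local Open Scope ring_scope.

Section QL.
Variables (R : realType) (X : finType) (Q : (X -> R) -> (X -> R)).
Hypothesis HQ : lower_transition_rate_operator Q.

Lemma Q_sum {I : Type} (r : seq I) (F : I -> X -> R) (x : X) :
  \sum_(i <- r) Q (F i) x <= Q (fun z => \sum_(i <- r) F i z) x.
Proof.
case: HQ => H0 Hadd _ _.
elim: r => [|a r IH].
  rewrite big_nil.
  have -> : (fun z : X => \sum_(i <- [::]) F i z) = (fun _ => 0).
    by apply: funext => z; rewrite big_nil.
  by rewrite H0.
rewrite big_cons.
have -> : (fun z : X => \sum_(i <- a :: r) F i z) =
   (fun z => F a z + (fun z => \sum_(i <- r) F i z) z).
  by apply: funext => z; rewrite big_cons.
apply: le_trans (Hadd _ _ _).
by rewrite lerD2l.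
Qed.

Lemma Q_min_ge0 (f : X -> R) (x : X) :
  (forall z, f x <= f z) -> 0 <= Q f x.
Proof.
move=> Hmin.
case: (HQ) => H0 Hadd Hhom Hpos.
set g := fun z => f z - f x.
have Hg : Q g x <= Q f x.
  have := Hadd g (fun _ => f x) x.
  rewrite H0 addr0.
  have -> : (fun z => g z + f x) = f by apply: funext => z; rewrite /g subrK.
  done.
apply: le_trans Hg.
have -> : g = (fun z => \sum_(y : X) (fun y z => g y * (if z == y then 1 else 0)) y z).
  apply: funext => z.
  rewrite (bigD1 z) //= eqxx mulr1 big1 ?addr0 // => y /negbTE Hy.
  by rewrite eq_sym Hy mulr0.
apply: le_trans (Q_sum (index_enum X) (fun y z => g y * (if z == y then 1 else 0)) x).
apply: sumr_ge0 => y _.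
case: (eqVneq x y) => [<-|Hxy].
  by rewrite /g subrr Hhom ?lexx // mul0r.
rewrite Hhom; last by rewrite /g subr_ge0.
apply: mulr_ge0; first by rewrite /g subr_ge0.
exact: Hpos.
Qed.
End QL.
Lemma deriv_lin (R : realType) (A : set R) (f : R -> R) (c l : R) :
  has_deriv_within A f c l -> forall e, 0 < e ->
  exists2 d, 0 < d & forall s, A s -> `|s - c| < d ->
     `|f s - f c - l * (s - c)| <= e * `|s - c|.
Proof.
move=> H e e0.
move/cvgrPdist_lt: H => /(_ e e0).
rewrite /prop_near1 /within /=.
move=> /nbhs_ballP [d d0 Hd].
exists d => // s As Hs.
case: (eqVneq s c) => [->|Hsc].
  by rewrite !subrr !(mulr0, normr0, subr0).
have hn : s - c != 0 by rewrite subr_eq0.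
have := Hd (s - c).
rewrite /ball /= sub0r normrN => /(_ Hs).
rewrite addrCA subrr addr0 => /(_ (conj hn As)) H.
have -> : f s - f c - l * (s - c) = (s - c) * ((s - c)^-1 * (f s - f c) - l).
  by field.
rewrite normrM mulrC ler_wpM2r //.
by rewrite distrC ltW.
Qed.
Arguments deriv_lin {R A f c l}.

Theorem lemma3 (R : realType) (X : finType) (x0 : X)
    (Q : (X -> R) -> (X -> R)) (t : R)
    (Gamma Gamma' : R -> X -> R) :
  lower_transition_rate_operator Q ->
  0 < t ->
  (forall x : X, forall s : R, s \in `[0, t] ->
      has_deriv_within [set` `[0, t]] (fun u => Gamma u x) s (Gamma' s x)) ->
  (forall x : X, {within [set` `[0, t]], continuous (fun s => Gamma' s x)}) ->
  (forall s : R, s \in `[0, t] -> forall x : X, Q (Gamma s) x <= Gamma' s x) ->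
  fmin x0 (Gamma 0) <= fmin x0 (Gamma t).
Proof.
move=> HQ t0 Hd _ HQG.
set m0 := fmin x0 (Gamma 0).
have key : forall eps, 0 < eps -> forall s, 0 <= s <= t -> forall y,
    m0 <= Gamma s y + eps * s.
  move=> eps eps0 s hs y; rewrite leNgt; apply/negP => Hlt.
  pose A := [set u | (0 <= u <= t) /\ exists z, Gamma u z + eps * u < m0].
  have As : A s by split => //; exists y.
  have An : A !=set0 by exists s.
  have Alb : lbound A 0 by move=> u [/andP[]].
  have Ahl : has_lbound A by exists 0.
  have hinf : has_inf A by [].
  set c := inf A.
  have c0 : 0 <= c := lb_le_inf An Alb.
  have cs : c <= s := ge_inf Ahl As.
  have ct : c <= t by case/andP: hs => _ st; exact: le_trans cs st.
  have cin : c \in `[0, t] by rewrite in_itv /= c0 ct.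
  have P2 : forall u, 0 <= u -> u < c -> forall z, m0 <= Gamma u z + eps * u.
    move=> u u0 uc z; rewrite leNgt; apply/negP => H.
    have Au : A u.
      split; last by exists z.
      by rewrite u0 /=; exact: ltW (lt_le_trans uc ct).
    have := ge_inf Ahl Au; rewrite -/c => cu.
    by move: (lt_le_trans uc cu); rewrite ltxx.
  have P3 : forall z, m0 <= Gamma c z + eps * c.
    move=> z.
    have [c_eq0|c_gt0] : c = 0 \/ 0 < c.
      by move: c0; rewrite le_eqVlt => /orP[/eqP <-|->]; [left|right].
      by rewrite c_eq0 mulr0 addr0 /m0 /fmin; exact: bigmin_le.
    rewrite leNgt; apply/negP => Hlt'.
    set gap := m0 - (Gamma c z + eps * c).
    have gap0 : 0 < gap by rewrite /gap subr_gt0.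
    set l := Gamma' c z.
    have [d d0 Hd'] := deriv_lin (Hd z c cin) 1 ltr01.
    set K := `|l| + 1.
    have K0 : 0 < K by rewrite /K ltr_pwDr.
    set r := Num.min (Num.min d c) (gap / K) / 2.
    have mpos : 0 < Num.min (Num.min d c) (gap / K).
      by rewrite !lt_min d0 c_gt0 divr_gt0.
    have r0 : 0 < r by rewrite /r divr_gt0.
    have hm1 : Num.min (Num.min d c) (gap / K) <= d.
      by rewrite !ge_min lexx.
    have hm2 : Num.min (Num.min d c) (gap / K) <= c.
      by rewrite !ge_min lexx orbT.
    have hm3 : Num.min (Num.min d c) (gap / K) <= gap / K.
      by rewrite !ge_min lexx orbT.
    have hgK : gap / K * K = gap by rewrite divfK // gt_eqF.
    have rK : r * K <= gap / 2.
      have : r * K <= gap / K / 2 * K.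
        apply: ler_wpM2r; first exact: ltW.
        by rewrite /r; lra.
      by rewrite [X in _ <= X -> _]mulrAC hgK.
    have rd : r < d by rewrite /r; lra.
    have rc : r < c by rewrite /r; lra.
    pose u := c - r.
    have u0 : 0 <= u by rewrite /u; lra.
    have uc : u < c by rewrite /u; lra.
    have uin : [set` `[0, t]] u by rewrite /= in_itv /= u0 /=; lra.
    have hur : `|u - c| = r by rewrite /u addrAC subrr sub0r normrN gtr0_norm.
    have := Hd' u uin; rewrite hur => /(_ rd); rewrite mul1r ler_norml => /andP[_ H2].
    have HP := P2 u u0 uc z.
    have hl2 : - l <= `|l| by rewrite -normrN ler_norm.
    have F3 : - (l * r) <= `|l| * r by rewrite -mulNr ler_wpM2r // ltW.
    have F4 : l * (u - c) = - (l * r) by rewrite /u addrAC subrr sub0r mulrN.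
    have F5 : eps * u = eps * c - eps * r by rewrite /u mulrBr.
    have F6 : r * K = `|l| * r + r by rewrite /K mulrDr mulr1 mulrC.
    have hepsr : 0 < eps * r by rewrite mulr_gt0.
    rewrite -/l in H2.
    rewrite F4 in H2; rewrite F5 in HP; rewrite F6 in rK.
    move: H2 HP rK F3 hepsr gap0; rewrite /gap.
    clearbody u; clear.
    lra.
  have P4 : forall z, exists dz, 0 < dz /\ forall u, c <= u <= t -> u < c + dz ->
      m0 <= Gamma u z + eps * u.
    move=> z.
    set l := Gamma' c z.
    have [d d0 Hd'] := deriv_lin (Hd z c cin) eps eps0.
    have base : forall u, c <= u <= t -> u < c + d ->
        Gamma c z + eps * c + l * (u - c) <= Gamma u z + eps * u.
      move=> u /andP[cu ut] ud.
      have uin : [set` `[0, t]] u by rewrite /= in_itv /= ut andbT; lra.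
      have hu : `|u - c| = u - c by rewrite ger0_norm // subr_ge0.
      have := Hd' u uin; rewrite hu => /(_ ltac:(lra)).
      rewrite ler_norml => /andP[H1 _].
      have F5 : eps * u = eps * c + eps * (u - c) by rewrite mulrBr addrCA subrr addr0.
      rewrite F5 /l.
      move: H1; clear; lra.
    have [hl|hl] := lerP 0 l.
      exists d; split => // u hu ud.
      apply: le_trans (base u hu ud).
      have : 0 <= l * (u - c) by rewrite mulr_ge0 // subr_ge0; case/andP: hu.
      have := P3 z; clear; lra.
    have agap : m0 < Gamma c z + eps * c.
      rewrite lt_def P3 andbT; apply/negP => /eqP Heq.
      have Hmin : forall w, Gamma c z <= Gamma c w.
        move=> w; have := P3 w; rewrite -Heq. clear; lra.
      have := @Q_min_ge0 R X Q HQ _ _ Hmin.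
      have := HQG c cin z; rewrite -/l. lra.
    set a := Gamma c z + eps * c.
    have ql : 0 < - l by rewrite oppr_gt0.
    have q0 : 0 < (a - m0) / - l by rewrite divr_gt0 // subr_gt0.
    exists (Num.min d ((a - m0) / - l)); split; first by rewrite lt_min d0 q0.
    move=> u hu ud.
    have ud1 : u < c + d by apply: lt_le_trans ud _; rewrite lerD2l ge_min lexx.
    apply: le_trans (base u hu ud1).
    have ud2 : u - c <= (a - m0) / - l.
      have : u < c + (a - m0) / - l by apply: lt_le_trans ud _; rewrite lerD2l ge_min lexx orbT.
      lra.
    have H : (u - c) * - l <= a - m0.
      by rewrite -ler_pdivlMr.
    have E : l * (u - c) = - ((u - c) * - l) by ring.
    rewrite E; move: H; rewrite /a; clear; lra.
  have [dd Hdd] := choice P4.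
  pose del := \big[Num.min/1]_(z : X) dd z.
  have del0 : 0 < del.
    apply: (big_ind (fun v => 0 < v)) => //.
      by move=> p q p0 q0; rewrite lt_min p0 q0.
    by move=> z _; case: (Hdd z).
  have [u Au hu] := inf_adherent del0 hinf.
  case: (Au) => hut [z Hz].
  have cu : c <= u := ge_inf Ahl Au.
  have : m0 <= Gamma u z + eps * u.
    case: (Hdd z) => _; apply; first by rewrite cu; case/andP: hut.
    apply: lt_le_trans hu _; rewrite lerD2l /del.
    exact: bigmin_le.
  by rewrite leNgt Hz.
apply/ler_addgt0Pr => e e0.
have hq : 0 < e / t by rewrite divr_gt0.
have ket : forall y, m0 - e <= Gamma t y.
  move=> y; have := key _ hq t; rewrite lexx ltW // => /(_ erefl y).
  by rewrite divfK ?gt_eqF // lerBlDr.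
rewrite -lerBlDr /fmin; apply: le_bigmin => //.
Qed.
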